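(* Let $G$ be a finite simple graph and $d,M$ positive integers. Suppose $\xi(G)\le d$ and $G$ contains $M$ pairwise vertex-disjoint cliques of size $d$. Then $\Delta_{Md}\le\widehat{G}\otimes\mathcal{C}_d$.
   Context: The orthogonal rank $\xi(G)$ is the smallest $d$ such that there are unit vectors $(u_g)_{g\in V(G)}$ in $\mathbb{C}^d$ with $\langle u_g|u_{g'}\rangle=0$ whenever $g,g'$ are adjacent. A noncommutative graph is a subspace $S\subseteq B(\mathcal{H})$ ($\mathcal{H}$ finite-dimensional) with $I\in S$, $S^*=S$. A cohomomorphism from $T\subseteq B(\mathcal{K})$ to $S\subseteq B(\mathcal{H})$ is a finite family of linear maps $E_i:\mathcal{K}\to\mathcal{H}$ with $\sum_iE_i^*E_i=I$ and $E_i^*SE_j\subseteq T$ for all $i,j$; $T\le S$ if one exists. $S\otimes T=\operatorname{span}\{A\otimes B:A\in S,B\in T\}$. $\widehat{G}=\operatorname{span}\{|x\rangle\langle x'|:x,x'\in V(G),\ x=x'\text{ or }x\sim x'\}\subseteq B(\mathbb{C}^{V(G)})$; $\mathcal{C}_d=\mathbb{C}I\subseteq B(\mathbb{C}^d)$; $\Delta_n\subseteq B(\mathbb{C}^n)$ is the subspace of operators diagonal in the standard basis (the noncommutative graph of the edgeless graph on $n$ vertices). *)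

(* Defs.v *)
From HB Require Import structures.
From mathcomp Require Import all_boot all_algebra.
From mathcomp Require Import complex mxtens.
From mathcomp Require Import Rstruct.
Set Implicit Arguments. Unset Strict Implicit. Unset Printing Implicit Defensive.
Import GRing.Theory Num.Theory.
Local Open Scope ring_scope.

Definition C : numClosedFieldType := (Rdefinitions.R)[i].

Definition adjmx {m n : nat} (A : 'M[C]_(m, n)) : 'M[C]_(n, m) :=
  (map_mx Num.conj A)^T.

(* standard inner product <u|v> = u^* v on C^d (antilinear in u) *)
Definition inner {d : nat} (u v : 'cV[C]_d) : C := (adjmx u *m v) 0 0.

Definition simple_graph {n : nat} (e : rel 'I_n) : Prop :=
  symmetric e /\ irreflexive e.

Definition orth_rep {n : nat} (e : rel 'I_n) (d : nat) : Prop :=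
  exists u : 'I_n -> 'cV[C]_d,
    (forall g, inner (u g) (u g) = 1) /\
    (forall g g', e g g' -> inner (u g) (u g') = 0).

(* xi(G) <= d : the smallest dimension of an orthogonal representation is
   at most d, i.e. some dimension d' <= d admits one *)
Definition orth_rank_le {n : nat} (e : rel 'I_n) (d : nat) : Prop :=
  exists2 d', (d' <= d)%N & orth_rep e d'.

Definition is_clique {n : nat} (e : rel 'I_n) (K : {set 'I_n}) : Prop :=
  forall x y, x \in K -> y \in K -> x != y -> e x y.

Definition has_disjoint_cliques {n : nat} (e : rel 'I_n) (M d : nat) : Prop :=
  exists K : 'I_M -> {set 'I_n},
    (forall i, #|K i| = d /\ is_clique e (K i)) /\
    (forall i j, i != j -> [disjoint K i & K j]).

(* Noncommutative graphs are subspaces of B(C^n) = 'M[C]_n *)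

Definition Ghat {n : nat} (e : rel 'I_n) : {vspace 'M[C]_n} :=
  (\sum_(x : 'I_n) \sum_(y : 'I_n | (x == y) || e x y)
      <[delta_mx x y]>)%VS.

Definition Cnc (d : nat) : {vspace 'M[C]_d} := <[1%:M]>%VS.

Definition Delta (n : nat) : {vspace 'M[C]_n} :=
  (\sum_(x : 'I_n) <[delta_mx x x]>)%VS.

(* S (x) T = span{ A (x) B : A in S, B in T } (spanned by tensor products
   of basis elements); A (x) B is the Kronecker product tensmx *)
Definition nc_tensor {m n : nat} (S : {vspace 'M[C]_m}) (T : {vspace 'M[C]_n})
  : {vspace 'M[C]_(m * n)} :=
  (<< [seq A *t B | A <- (vbasis S : seq _), B <- (vbasis T : seq _)] >>)%VS.

(* T <= S : there is a cohomomorphism from T (in B(C^k)) to S (in B(C^h)):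
   finitely many E_i : C^k -> C^h with sum E_i^* E_i = I and
   E_i^* S E_j included in T *)
Definition cohom_le {k h : nat} (T : {vspace 'M[C]_k}) (S : {vspace 'M[C]_h})
  : Prop :=
  exists (N : nat) (E : 'I_N -> 'M[C]_(h, k)),
    \sum_(i < N) adjmx (E i) *m E i = 1%:M /\
    (forall (i j : 'I_N) (A : 'M[C]_h),
        A \in S -> adjmx (E i) *m A *m E j \in T).

(* Main.v *)
Require Import Defs.
From HB Require Import structures.
From mathcomp Require Import all_boot all_algebra.
From mathcomp Require Import complex mxtens.
Set Implicit Arguments. Unset Strict Implicit. Unset Printing Implicit Defensive.
Import GRing.Theory Num.Theory.
Local Open Scope ring_scope.

Lemma sum0C (I : Type) (r : seq I) (P : pred I) (F : I -> C) :
  (forall i, P i -> F i = 0) -> \sum_(i <- r | P i) F i = 0.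
Proof. exact: big1. Qed.

Lemma diag_in_Delta p (D : 'M[C]_p) : (forall i j, i != j -> D i j = 0) -> D \in Delta p.
Proof.
move=> HD.
have -> : D = \sum_(x < p) D x x *: delta_mx x x.
  apply/matrixP => i j; rewrite summxE (bigD1 i) //= sum0C ?addr0.
    rewrite !mxE eqxx /=; case: (eqVneq j i) => [->|nij]; first by rewrite mulr1.
    by rewrite mulr0 HD // eq_sym.
  by move=> x nx; rewrite !mxE eq_sym (negbTE nx) mulr0.
by apply: memv_sumr => x _; apply: memvZ; apply: memv_line.
Qed.

Lemma tens_scale_r m1 n1 p q (a : 'M[C]_(m1,n1)) (c : C) (B : 'M[C]_(p,q)) :
  a *t (c *: B) = c *: (a *t B).
Proof. by apply/matrixP => i j; rewrite !mxE mulrCA. Qed.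

Definition hmap {q p} (E : 'M[C]_(q,p)) (A : 'M[C]_q) : 'M[C]_p := adjmx E *m A *m E.
Lemma hmap_lin q p (E : 'M[C]_(q,p)) : linear (hmap E).
Proof. by move=> k u v; rewrite /hmap mulmxDr mulmxDl -scalemxAr -scalemxAl. Qed.
HB.instance Definition _ q p E := GRing.isLinear.Build C _ _ _ (@hmap q p E) (hmap_lin E).

Definition tens1 n d (a : 'M[C]_n) : 'M[C]_(n*d) := a *t (1%:M : 'M[C]_d).
Lemma tens1_lin n d : linear (@tens1 n d).
Proof. by move=> k u v; apply/matrixP => i j; rewrite !mxE mulrDl mulrA. Qed.
HB.instance Definition _ n d := GRing.isLinear.Build C 'M[C]_n 'M[C]_(n*d) *:%R (@tens1 n d) (@tens1_lin n d).

Lemma reduce n (e : rel 'I_n) d p (E : 'M[C]_(n*d, p)) :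
  (forall x y, (x == y) || e x y -> hmap E (delta_mx x y *t (1%:M : 'M[C]_d)) \in Delta p) ->
  forall A, A \in nc_tensor (Ghat e) (Cnc d) -> hmap E A \in Delta p.
Proof.
move=> H.
have sub : (nc_tensor (Ghat e) (Cnc d) <= linfun (hmap E) @^-1: Delta p)%VS.
  apply/span_subvP => A /allpairsP [[a b] [/= ha hb ->]].
  rewrite -(memv_preim (linfun (hmap E))) lfunE /=.
  have /vlineP [c ->] := vbasis_mem hb.
  rewrite tens_scale_r linearZ /=; apply: memvZ.
  have sG : (Ghat e <= linfun (hmap E \o @tens1 n d) @^-1: Delta p)%VS.
    apply/subv_sumP => x _; apply/subv_sumP => y hxy.
    by rewrite -memvE -memv_preim lfunE /=; apply: H.
  by move/subvP: sG => /(_ a (vbasis_mem ha)); rewrite -memv_preim lfunE.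
by move=> A /(subvP sub); rewrite -memv_preim lfunE.
Qed.
Lemma adjmx_tens m1 n1 p q (A : 'M[C]_(m1,n1)) (B : 'M[C]_(p,q)) :
  adjmx (A *t B) = adjmx A *t adjmx B.
Proof. by rewrite /adjmx map_mxT trmx_tens. Qed.
Lemma adjmx_mul m1 n1 p (A : 'M[C]_(m1,n1)) (B : 'M[C]_(n1,p)) :
  adjmx (A *m B) = adjmx B *m adjmx A.
Proof. by rewrite /adjmx map_mxM trmx_mul. Qed.
Lemma adjmx_delta m1 n1 (i : 'I_m1) (j : 'I_n1) : adjmx (delta_mx i j) = delta_mx j i.
Proof. by apply/matrixP=> a b; rewrite !mxE rmorph_nat andbC. Qed.
Lemma tens11 (X Y : 'M[C]_1) : (X *t Y) 0 0 = X 0 0 * Y 0 0.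
Proof. by rewrite mxE !(ord1 (_ .1)) !(ord1 (_ .2)). Qed.
Lemma entry_col p q (E : 'M[C]_(q,p)) (F : 'I_p -> 'cV[C]_q) (A : 'M[C]_q) c c' :
  E = \matrix_(r, c) F c r 0 ->
  (adjmx E *m A *m E) c c' = (adjmx (F c) *m A *m F c') 0 0.
Proof.
move=> ->; rewrite !mxE; apply: eq_bigr => s _; rewrite !mxE; congr (_ * _).
by apply: eq_bigr => r _; rewrite !mxE.
Qed.
Lemma L2 n d (x y k k' : 'I_n) (v v' : 'cV[C]_d) :
  (adjmx (delta_mx k (0:'I_1) *t v) *m (delta_mx x y *t (1%:M : 'M_d)) *m (delta_mx k' (0:'I_1) *t v')) 0 0
  = ((k == x) && (y == k'))%:R * inner v v'.
Proof.
rewrite adjmx_tens adjmx_delta !tensmx_mul tens11 mulmx1 /inner; congr (_ * _).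
case: (eqVneq k x) => [->|nkx]; last by rewrite mul_delta_mx_0 // !mul0mx mxE.
rewrite mul_delta_mx; case: (eqVneq y k') => [->|nyk]; last by rewrite mul_delta_mx_0 // mxE.
by rewrite mul_delta_mx mxE !eqxx.
Qed.
Lemma L3 n d (k k' : 'I_n) (v v' : 'cV[C]_d) :
  (adjmx (delta_mx k (0:'I_1) *t v) *m (delta_mx k' (0:'I_1) *t v')) 0 0
  = (k == k')%:R * inner v v'.
Proof.
rewrite adjmx_tens adjmx_delta !tensmx_mul tens11 /inner; congr (_ * _).
case: (eqVneq k k') => [->|nkx]; last by rewrite mul_delta_mx_0 // mxE.
by rewrite mul_delta_mx mxE !eqxx.
Qed.
Lemma pad n (e : rel 'I_n) d : orth_rank_le e d ->
  exists v : 'I_n -> 'cV[C]_d,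
    (forall g, inner (v g) (v g) = 1) /\
    (forall g g', e g g' -> inner (v g) (v g') = 0).
Proof.
case=> d' led [u [Hu1 Hu2]].
pose P : 'M[C]_(d, d') := \matrix_(i, j) (i == j :> nat)%:R.
have PP : adjmx P *m P = 1%:M.
  apply/matrixP => j k; rewrite !mxE.
  have jd : (j < d)%N by apply: leq_trans (ltn_ord j) led.
  rewrite (bigD1 (Ordinal jd)) //=. 
  have -> : \sum_(i < d | i != Ordinal jd) adjmx P j i * P i k = 0.
    apply: big1 => i /eqP ni; rewrite !mxE rmorph_nat.
    case: eqP => [ij|]; last by rewrite mul0r.
    by case: ni; apply: val_inj.
  by rewrite addr0 !mxE eqxx rmorph_nat mul1r.
have Hin g g' : inner (P *m u g) (P *m u g') = inner (u g) (u g').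
  by rewrite /inner adjmx_mul -mulmxA (mulmxA (adjmx P)) PP mul1mx.
exists (fun g => P *m u g); split=> [g|g g' h]; rewrite Hin; auto.
Qed.

Theorem lemma3p9 (n : nat) (e : rel 'I_n) (d M : nat) :
  simple_graph e -> (0 < d)%N -> (0 < M)%N ->
  orth_rank_le e d -> has_disjoint_cliques e M d ->
  cohom_le (Delta (M * d)) (nc_tensor (Ghat e) (Cnc d)).
Proof.
move=> _ d0 M0 Horth [K [HK Hdis]].
have [v [Hv1 Hv0]] := pad Horth.
pose k (m : 'I_M) (a : 'I_d) : 'I_n := enum_val (cast_ord (esym (proj1 (HK m))) a).
have kin m a : k m a \in K m by apply: enum_valP.
have kinj m a m' b : k m a = k m' b -> (m, a) = (m', b).
  move=> h; case: (eqVneq m m') => [em|nm].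
    subst m'; congr pair; apply: (@cast_ord_inj _ _ (esym (proj1 (HK m)))).
    exact: enum_val_inj h.
  have := disjointFr (Hdis _ _ nm) (kin m a).
  by rewrite h kin.
pose kk (c : 'I_(M * d)) := k (mxtens_unindex c).1 (mxtens_unindex c).2.
have kkinj : injective kk.
  move=> c c' /kinj h; apply: (can_inj (@mxtens_unindexK M d)).
  by move: h; rewrite -!surjective_pairing.
pose F (c : 'I_(M * d)) : 'cV[C]_(n * d) := delta_mx (kk c) (0 : 'I_1) *t v (kk c).
pose E : 'M[C]_(n * d, M * d) := \matrix_(r, c) F c r 0.
exists 1%N, (fun _ => E); split.
  rewrite big_ord1; apply/matrixP => c c'.
  rewrite -(mulmx1 (adjmx E)) (@entry_col _ _ E F _ c c' (erefl E)) mulmx1 L3 !mxE (inj_eq kkinj).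
  by case: (eqVneq c c') => [->|_]; rewrite ?Hv1 ?mul1r ?mul0r.
move=> _ _ A HA; apply: (reduce _ HA) => x y hxy; apply: diag_in_Delta => c c' ncc.
rewrite /hmap (@entry_col _ _ E F _ c c' (erefl E)) L2.
case: (eqVneq (kk c) x) => [hx|]; last by rewrite mul0r.
case: (eqVneq y (kk c')) => [hy|]; last by rewrite andbF mul0r.
case/orP: hxy => [/eqP exy|exy].
  by move: ncc; rewrite -(inj_eq kkinj) hx exy hy eqxx.
by rewrite /= hx -hy Hv0 // mulr0.
Qed.
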